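(* For a graph $G$, $\gamma_{(2,2,2)}(G)=3$ if and only if $\gamma_{\times2,t}(G)=3$.
   Context: All graphs are finite and simple; $N(v)$ is the open neighbourhood. $\gamma_{(2,2,2)}(G)$ is the minimum of $\sum_v f(v)$ over functions $f:V(G)\to\{0,1,2\}$ with $\sum_{u\in N(v)}f(u)\ge2$ for every vertex $v$ (defined when such $f$ exists, i.e., when $G$ has no isolated vertex). $\gamma_{\times2,t}(G)$ is the minimum size of $S\subseteq V(G)$ such that every vertex has at least two neighbours in $S$ (defined when $G$ has minimum degree at least $2$). *)

(* Defs.v *)
From mathcomp Require Import all_boot.
Set Implicit Arguments. Unset Strict Implicit. Unset Printing Implicit Defensive.

Definition simple_graph (T : finType) (e : rel T) : Prop :=
  symmetric e /\ irreflexive e.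

Definition is_222_fun (T : finType) (e : rel T) (f : {ffun T -> 'I_3}) : Prop :=
  forall v : T, 2 <= \sum_(u | e v u) (f u : nat).

Definition weight (T : finType) (f : {ffun T -> 'I_3}) : nat :=
  \sum_(v : T) (f v : nat).

Definition gamma222_eq (T : finType) (e : rel T) (k : nat) : Prop :=
  (exists f, is_222_fun e f /\ weight f = k) /\
  (forall f, is_222_fun e f -> k <= weight f).

Definition is_dtd_set (T : finType) (e : rel T) (S : {set T}) : Prop :=
  forall v : T, 2 <= #|[set u in S | e v u]|.

Definition min_degree_ge2 (T : finType) (e : rel T) : Prop :=
  forall v : T, 2 <= #|[set u | e v u]|.

(* gamma_{x2,t}(G) is defined (min degree >= 2) and equals k *)
Definition gammax2t_eq (T : finType) (e : rel T) (k : nat) : Prop :=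
  min_degree_ge2 e /\
  (exists S, is_dtd_set e S /\ #|S| = k) /\
  (forall S, is_dtd_set e S -> k <= #|S|).

(* Main.v *)
Require Import Defs.
From mathcomp Require Import all_boot.
From mathcomp Require Import zify.
Set Implicit Arguments. Unset Strict Implicit.

Lemma w_ge (T : finType) (e : rel T) (He : simple_graph e) (f : {ffun T -> 'I_3}) :
  is_222_fun e f -> forall v, 2 + f v <= weight f.
Proof.
move=> H v; rewrite /weight (bigD1 v) //= [X in _ <= X]addnC leq_add2r.
apply: leq_trans (H v) _.
rewrite [X in X <= _]big_mkcond [X in _ <= X]big_mkcond /=.
apply: leq_sum => u _.
case evu: (e v u) => //; case: eqP => // uv; subst u.
by rewrite (He.2 v) in evu.
Qed.

Lemma sum_ind (T : finType) (S : {set T}) (g : T -> nat) (P : pred T) :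
  (forall u, g u = if u \in S then 1 else 0) ->
  \sum_(u | P u) g u = #|[set u in S | P u]|.
Proof.
move=> Hg; rewrite (eq_bigr (fun u => if u \in S then 1 else 0)) //.
rewrite -big_mkcondr sum1_card; apply: eq_card => u.
by rewrite !inE andbC.
Qed.

Theorem theorem17 (T : finType) (e : rel T) (He : simple_graph e) :
  gamma222_eq e 3 <-> gammax2t_eq e 3.
Proof.
have lb : forall f, is_222_fun e f -> forall v0 : T, 3 <= weight f.
  move=> f Hf v0; have H0 := w_ge He Hf v0.
  rewrite ltnNge; apply/negP => Hw.
  have Hz : forall v, (f v : nat) = 0.
    by move=> v; have := w_ge He Hf v; move: Hw; lia.
  have : weight f = 0 by rewrite /weight big1.
  by move=> W; rewrite W in H0.
pose ind (S : {set T}) := [ffun v => if v \in S then @Ordinal 3 1 isT else @Ordinal 3 0 isT].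
have indE : forall S u, (ind S u : nat) = if u \in S then 1 else 0.
  by move=> S u; rewrite ffunE; case: ifP.
have ind222 : forall S, is_dtd_set e S -> is_222_fun e (ind S) /\ weight (ind S) = #|S|.
  move=> S HS; split.
    by move=> v; rewrite (sum_ind _ (indE S)).
  rewrite /weight (sum_ind _ (indE S)); apply: eq_card => u; by rewrite !inE andbT.
split.
- move=> [[f [Hf Wf]] _].
  have v0 : T.
    case: (pickP T) => [x _ // | H0]; move: Wf; rewrite /weight big_pred0 //.
  have Hle : forall v, (f v : nat) <= 1.
    by move=> v; have := w_ge He Hf v; rewrite Wf; lia.
  pose S := [set v | (f v : nat) != 0].
  have fE : forall u, (f u : nat) = if u \in S then 1 else 0.
    move=> u; rewrite inE; have := Hle u; by case: (f u : nat) => [|[|]].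
  have dS : is_dtd_set e S.
    by move=> v; rewrite -(sum_ind _ fE); apply: Hf.
  split; last split.
  + move=> v; apply: leq_trans (dS v) _; apply: subset_leq_card.
    by apply/subsetP => u; rewrite !inE => /andP[].
  + exists S; split => //; rewrite -Wf /weight (sum_ind _ fE).
    apply: eq_card => u; by rewrite !inE andbT.
  + move=> S' HS'; have [H1 H2] := ind222 S' HS'; rewrite -H2; exact: lb.
- move=> [_ [[S [HS CS]] _]]; split.
  + exists (ind S); have [H1 H2] := ind222 S HS; by rewrite H2.
  + move=> f Hf.
    have : 0 < #|S| by rewrite CS.
    case/card_gt0P => v0 _; exact: lb Hf v0.
Qed.
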